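(* Let $G$ be a tree. Then the independence complex $\Delta(G)$ is sortable if and only if $G$ is a path graph.
   Context: The independence complex $\Delta(G)$ is the simplicial complex of all independent sets of $G$. For finite $F,G\subset\mathbb{N}$ with $|F|=r,|G|=s$, write $\mathbf{x}^F\mathbf{x}^G=x_{i_1}\cdots x_{i_{r+s}}$ with $i_1\le\cdots\le i_{r+s}$ (where $\mathbf{x}^F=\prod_{i\in F}x_i$) and set $\mathrm{sort}(F,G)=(\{i_k:k\text{ odd}\},\{i_k:k\text{ even}\})$. A simplicial complex $\Delta$ with $V(\Delta)\subset\mathbb{N}$ is sortable with respect to the given labeling if $\mathrm{sort}(F,G)\in\Delta\times\Delta$ for all $F,G\in\Delta$; $\Delta$ is sortable if it is sortable with respect to some labeling of its vertices by distinct integers. *)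

(* Defs.v *)
From mathcomp Require Import all_boot.
Set Implicit Arguments. Unset Strict Implicit. Unset Printing Implicit Defensive.

(* A finite simple graph is a symmetric irreflexive relation e on a finType T. *)

Definition is_tree (T : finType) (e : rel T) : Prop :=
  [/\ 0 < #|T|,
      (forall x y : T, connect e x y) &
      (forall c : seq T, uniq c -> 2 < size c -> ~~ cycle e c)].

Definition is_path_graph (T : finType) (e : rel T) : Prop :=
  exists f : 'I_#|T| -> T, bijective f /\
    forall i j : 'I_#|T|, e (f i) (f j) = ((i.+1 == j) || (j.+1 == i)).

(* Independent sets of G = faces of the independence complex Delta(G). *)
Definition independent (T : finType) (e : rel T) (A : {set T}) : Prop :=
  forall x y, x \in A -> y \in A -> ~~ e x y.

(* sort(F,G): merge the labels of F and G (as a multiset) into i_1 <= ... <= i_{r+s};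
   first component = entries at odd positions (1-indexed), second = even positions. *)
Definition sort_pair (F G : seq nat) : seq nat * seq nat :=
  let s := sort leq (F ++ G) in
  ([seq nth 0 s i | i <- iota 0 (size s) & ~~ odd i],
   [seq nth 0 s i | i <- iota 0 (size s) & odd i]).

Definition lab_face (T : finType) (e : rel T) (lab : T -> nat) (L : seq nat) : Prop :=
  {subset L <= codom lab} /\ independent e [set v | lab v \in L].

Definition sortable_wrt (T : finType) (e : rel T) (lab : T -> nat) : Prop :=
  forall F G : {set T}, independent e F -> independent e G ->
    lab_face e lab (sort_pair [seq lab v | v <- enum F] [seq lab v | v <- enum G]).1 /\
    lab_face e lab (sort_pair [seq lab v | v <- enum F] [seq lab v | v <- enum G]).2.

Definition indep_complex_sortable (T : finType) (e : rel T) : Prop :=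
  exists lab : T -> nat, injective lab /\ sortable_wrt e lab.

(* Main.v *)
From mathcomp Require Import all_boot zify.
Require Import Defs.
Set Implicit Arguments. Unset Strict Implicit. Unset Printing Implicit Defensive.

Definition noadj (A : seq nat) := forall k, ~~ ((k \in A) && (k.+1 \in A)).

Lemma count_noadj (A : seq nat) k : uniq A -> noadj A ->
  count (predU (pred1 k) (pred1 k.+1)) A <= 1.
Proof.
move=> uA nA.
have := count_predUI (pred1 k) (pred1 k.+1) A.
rewrite !count_uniq_mem //.
have := nA k; case: (k \in A); case: (k.+1 \in A) => //= _; lia.
Qed.

Lemma sorted_adj (A B : seq nat) : uniq A -> uniq B -> noadj A -> noadj B ->
  forall p q, p < size (sort leq (A ++ B)) -> q < size (sort leq (A ++ B)) ->
  nth 0 (sort leq (A ++ B)) q = (nth 0 (sort leq (A ++ B)) p).+1 -> q = p.+1.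
Proof.
move=> uA uB nA nB p q.
set s := sort leq (A ++ B) => ps qs E.
have ss : sorted leq s by apply: sort_sorted; exact: leq_total.
have mono := sorted_leq_nth leq_trans leqnn 0 ss.
have pq : p < q.
  rewrite ltnNge; apply/negP => qp.
  have := mono q p qs ps qp; rewrite E; lia.
set k := nth 0 s p in E.
case: (ltnP q p.+2) => [|qp2]; first by lia.
have m1 := mono p p.+1 ps (leq_ltn_trans pq qs) (leqnSn p).
have m2 := mono p.+1 q (leq_ltn_trans pq qs) qs pq.
rewrite E -/k in m2.
pose a := predU (pred1 k) (pred1 k.+1).
have cs : count a s = count a A + count a B.
  by rewrite -count_cat; apply/permP; rewrite perm_sort.
have := count_noadj k uA nA; have := count_noadj k uB nB.
have : 3 <= count a s.
  rewrite -(cat_take_drop p s) count_cat (drop_nth 0 ps) /=.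
  rewrite (drop_nth 0 (leq_ltn_trans pq qs)) /=.
  have : 0 < count a (drop p.+2 s).
    rewrite -has_count; apply/hasP; exists (nth 0 s q).
      have -> : nth 0 s q = nth 0 (drop p.+2 s) (q - p.+2) by rewrite nth_drop; congr nth; lia.
      apply: mem_nth; rewrite size_drop; move: qs qp2; clear; move: (size s) => n; lia.
    by rewrite /a E /= eqxx orbT.
  rewrite /= -/k eqxx /=.
  have -> : (nth 0 s p.+1 == k) || (nth 0 s p.+1 == k.+1).
    move: m1 m2; rewrite -/k; case: (ltngtP (nth 0 s p.+1) k) => //; lia.
  lia.
rewrite cs -/a; lia.
Qed.

Lemma comp_ok (A B : seq nat) (P : pred nat) : uniq A -> uniq B -> noadj A -> noadj B ->
  (forall i, P i.+1 = ~~ P i) ->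
  forall m n, m \in [seq nth 0 (sort leq (A ++ B)) i | i <- iota 0 (size (sort leq (A ++ B))) & P i] ->
  n \in [seq nth 0 (sort leq (A ++ B)) i | i <- iota 0 (size (sort leq (A ++ B))) & P i] ->
  n != m.+1.
Proof.
move=> uA uB nA nB hP m n /mapP[i] + -> /mapP[j] + ->.
rewrite !mem_filter !mem_iota /= !add0n => /andP[Pi si] /andP[Pj sj].
apply/eqP => E; have := sorted_adj uA uB nA nB si sj E => ji.
by move: Pj; rewrite ji hP Pi.
Qed.

Lemma comp_sub (A B : seq nat) (P : pred nat) m :
  m \in [seq nth 0 (sort leq (A ++ B)) i | i <- iota 0 (size (sort leq (A ++ B))) & P i] ->
  m \in A ++ B.
Proof.
move=> /mapP[i]; rewrite mem_filter mem_iota /= add0n => /andP[_ si] ->.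
by rewrite -(mem_sort leq); apply: mem_nth.
Qed.

Lemma path_sortable (T : finType) (e : rel T) : is_path_graph e -> indep_complex_sortable e.
Proof.
case=> f [[g fg gf] he].
pose lab := fun v => nat_of_ord (g v).
have ilab : injective lab by move=> x y /val_inj /(can_inj gf).
have elab : forall x y, e x y = ((lab x).+1 == lab y) || ((lab y).+1 == lab x).
  by move=> x y; rewrite -{1}(gf x) -{1}(gf y) he.
exists lab; split => // F G iF iG.
have uniqm : forall H : {set T}, uniq [seq lab v | v <- enum H].
  by move=> H; rewrite map_inj_uniq ?enum_uniq.
have nadj : forall H : {set T}, independent e H -> noadj [seq lab v | v <- enum H].
  move=> H iH k; apply/negP => /andP[/mapP[x + ->] /mapP[y + Ey]].
  rewrite !mem_enum => xH yH.
  by move: (iH x y xH yH); rewrite elab Ey eqxx.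
have face : forall P : pred nat, (forall i, P i.+1 = ~~ P i) ->
   lab_face e lab [seq nth 0 (sort leq ([seq lab v | v <- enum F] ++ [seq lab v | v <- enum G])) i
     | i <- iota 0 (size (sort leq ([seq lab v | v <- enum F] ++ [seq lab v | v <- enum G]))) & P i].
  move=> P hP; split.
    move=> m /comp_sub; rewrite mem_cat => /orP[] /mapP[x _ ->]; exact: codom_f.
  move=> x y; rewrite !inE => hx hy; rewrite elab.
  have c1 := comp_ok (uniqm F) (uniqm G) (nadj F iF) (nadj G iG) hP hx hy.
  have c2 := comp_ok (uniqm F) (uniqm G) (nadj F iF) (nadj G iG) hP hy hx.
  by rewrite eq_sym (negbTE c1) eq_sym (negbTE c2).
rewrite /sort_pair /=; split; apply: face => i /=; first by rewrite negbK.
by [].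
Qed.

Lemma claw (T : finType) (e : rel T) (e_sym : symmetric e) (e_irr : irreflexive e)
  (lab : T -> nat) (ilab : injective lab) (hs : sortable_wrt e lab) v a b c :
  e v a -> e v b -> e v c -> a != b -> a != c -> b != c ->
  ~~ e a b -> ~~ e a c -> ~~ e b c -> False.
Proof.
move=> va vb vc ab ac bc nab nac nbc.
have iF : independent e [set v] by move=> x y; rewrite !inE => /eqP-> /eqP->; rewrite e_irr.
have in3 : forall x, x \in [set a; b; c] -> [\/ x = a, x = b | x = c].
  by move=> x; rewrite !inE -orbA => /or3P[] /eqP ->; [apply: Or31|apply: Or32|apply: Or33].
have iG : independent e [set a; b; c].
  move=> x y /in3[]-> /in3[]->;
    rewrite ?e_irr // e_sym //.
have [H1 H2] := hs _ _ iF iG.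
rewrite /sort_pair /= in H1 H2.
have vG : v \notin [set a; b; c].
  apply/negP => /in3[] E; [move: va|move: vb|move: vc]; by rewrite E e_irr.
set s := sort leq _ in H1 H2.
have us : uniq s.
  rewrite sort_uniq -map_cat map_inj_uniq // cat_uniq !enum_uniq /= andbT.
  apply/hasP => -[x]; rewrite mem_enum => xG; rewrite /= mem_enum inE => /eqP xv.
  by move: xG; rewrite xv (negbTE vG).
have ss : size s = 4.
  rewrite size_sort size_cat !size_map -!cardE cards1.
  have -> : [set a; b; c] = a |: (b |: [set c]) by apply/setP => x; rewrite !inE orbA.
  rewrite !cardsU1 cards1 !inE.
  by rewrite (negbTE ab) (negbTE ac) (negbTE bc).
have vs : lab v \in s by rewrite mem_sort mem_cat map_f // mem_enum inE.
have ms : forall m, m \in s -> m != lab v -> exists2 w, e v w & m = lab w.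
  move=> m; rewrite mem_sort mem_cat => /orP[] /mapP[w]; rewrite mem_enum.
    by rewrite inE => /eqP -> ->; rewrite eqxx.
  by move=> /in3[] -> -> _; [exists a|exists b|exists c].
have key : forall L, lab_face e lab L -> lab v \in L -> forall m, m \in L -> m \in s ->
    m != lab v -> False.
  move=> L [_ hL] vL m mL mS mv; have [w vw E] := ms m mS mv; subst m.
  by move: (hL v w); rewrite !inE vL mL vw => /(_ isT isT).
clearbody s.
case: s us ss vs ms key H1 H2 => [|s0 [|s1 [|s2 [|s3 []]]]] // us _ vs ms key H1 H2.
move: us; rewrite /= !inE !negb_or -!andbA => /and5P[n01 n02 n03 _ /andP[n12 /andP[n13 n23]]].
move: vs; rewrite !inE => /or4P[] /eqP E; subst.
- by apply: (key _ H1 _ s2); rewrite ?inE ?eqxx ?orbT // eq_sym.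
- by apply: (key _ H2 _ s3); rewrite ?inE ?eqxx ?orbT // eq_sym.
- by apply: (key _ H1 _ s0); rewrite ?inE ?eqxx ?orbT.
- by apply: (key _ H2 _ s1); rewrite ?inE ?eqxx ?orbT.
Qed.

Lemma sorted_rcons_last (T : eqType) (e : rel T) z (p : seq T) y :
  sorted e p -> p != [::] -> e (last z p) y -> sorted e (rcons p y).
Proof. by case: p => // h t /= sp _ hl; rewrite rcons_path sp. Qed.

Section Step.
Variables (T : finType) (e : rel T) (e_sym : symmetric e) (e_irr : irreflexive e).
Hypothesis claw3 : forall x a b c, e x a -> e x b -> e x c -> a != b -> a != c -> b != c -> False.

Lemma step (p : seq T) x y : uniq p -> sorted e p -> x \in p -> e x y -> y \notin p ->
  exists2 p', uniq p' /\ sorted e p' & size p' = (size p).+1.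
Proof.
move=> up sp xp exy yp.
set i := index x p.
have ip : i < size p by rewrite index_mem.
have nx : nth x p i = x by rewrite nth_index.
clearbody i.
case: (posnP i) => [i0|ipos].
  exists (y :: p) => //; split; first by rewrite /= yp.
  rewrite i0 in nx; clear ip i0; clear i.
  case: p up sp xp yp nx => // h t _ sp _ _ /= nx.
  by rewrite /= -/(sorted e (h :: t)) sp andbT nx e_sym.
case: (ltnP i.+1 (size p)) => [ilt|ige].
  have hs := (sortedP x sp).
  have ha := hs i.-1; have hb := hs i.
  have E1 : i.-1.+1 = i by lia.
  rewrite E1 nx in ha; move: ha => /(_ ip) ha.
  move: hb => /(_ ilt); rewrite nx => hb.
  exfalso; apply: (claw3 (x := x) (a := nth x p i.-1) (b := nth x p i.+1) (c := y)).
  - by rewrite e_sym.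
  - exact: hb.
  - exact: exy.
  - rewrite nth_uniq //; last exact: leq_ltn_trans (leq_pred i) ip.
    by apply/eqP => h; move: E1; rewrite h; lia.
  - apply/eqP => E; move: yp; rewrite -E mem_nth //; exact: leq_ltn_trans (leq_pred i) ip.
  - apply/eqP => E; move: yp; rewrite -E mem_nth //.
exists (rcons p y); last by rewrite size_rcons.
split; first by rewrite rcons_uniq yp.
apply: (sorted_rcons_last (z := x)) => //; first by case: (p) xp.
have -> : last x p = x.
  rewrite -nth_last; rewrite -{2}nx; congr nth; move: ip ige; case: (size p) => // n /= ; lia.
exact: exy.
Qed.

End Step.
Section Step2.
Variables (T : finType) (e : rel T) (e_sym : symmetric e) (e_irr : irreflexive e).
Hypothesis step : forall (p : seq T) x y, uniq p -> sorted e p -> x \in p -> e x y -> y \notin p ->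
  exists2 p', uniq p' /\ sorted e p' & size p' = (size p).+1.

Lemma grow n : forall p : seq T, #|T| - size p <= n -> uniq p -> sorted e p ->
  exists q : seq T, [/\ uniq q, sorted e q, size p <= size q &
     forall x y, x \in q -> e x y -> y \in q].
Proof.
elim: n => [|n IH] p hn up sp.
  exists p; split => // x y xp exy; apply/negPn/negP => yp.
  have [p' [up' _] sz] := step up sp xp exy yp.
  have := max_card (mem p'); rewrite (card_uniqP up') sz; lia.
case: (boolP [exists x, exists y, [&& x \in p, e x y & y \notin p]]).
  move=> /existsP[x /existsP[y /and3P[xp exy yp]]].
  have [p' [up' sp'] sz] := step up sp xp exy yp.
  have [q [uq sq sz' cq]] : exists q : seq T, [/\ uniq q, sorted e q, size p' <= size q &
     forall x y, x \in q -> e x y -> y \in q] by apply: IH => //; rewrite sz; move: hn; clear; lia.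
  by exists q; split => //; lia.
move=> /existsPn H; exists p; split => // x y xp exy.
by move/existsPn: (H x) => /(_ y); rewrite xp exy /= negbK.
Qed.

Lemma nocyc (q : seq T) z (acyc : forall c : seq T, uniq c -> 2 < size c -> ~~ cycle e c) :
  uniq q -> sorted e q -> forall i j, i.+2 <= j -> j < size q ->
  ~~ e (nth z q i) (nth z q j).
Proof.
move=> uq sq i j ij jq; apply/negP => E.
set c := drop i (take j.+1 q).
have uc : uniq c by rewrite drop_uniq // take_uniq.
have szc : size c = j.+1 - i by rewrite size_drop size_take; case: ltnP; lia.
have sc : sorted e c by rewrite drop_sorted // take_sorted.
have nc : forall k, k < size c -> nth z c k = nth z q (i + k).
  by move=> k kc; rewrite nth_drop nth_take //; lia.
apply: (negP (acyc c uc _)); first by lia.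
case: c uc szc sc nc => [|h t] //= _ szc sc nc.
rewrite rcons_path sc /=.
have -> : last h t = nth z q j.
  by rewrite -[last h t]/(last z (h :: t)) -nth_last /= nc // (_ : i + size t = j) //; lia.
have -> : h = nth z q i by have := nc 0 isT; rewrite addn0.
by rewrite e_sym.
Qed.
End Step2.

Unset Implicit Arguments.
Set Strict Implicit.
Theorem corollary1p9 (T : finType) (e : rel T)
  (e_sym : symmetric e) (e_irr : irreflexive e) (tree : is_tree e) :
  indep_complex_sortable e <-> is_path_graph e.
Proof.
split; last exact: path_sortable.
case=> lab [ilab hs]; case: tree => cT conn acyc.
have tri : forall x a b, e x a -> e x b -> a != b -> ~~ e a b.
  move=> x a b xa xb ab; apply/negP => E.
  have xa' : x != a by apply/eqP => h; move: xa; rewrite h e_irr.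
  have xb' : x != b by apply/eqP => h; move: xb; rewrite h e_irr.
  apply: (negP (acyc [:: x; a; b] _ isT)); last by rewrite /= xa E e_sym xb.
  by rewrite /= !inE negb_or xa' xb' ab.
have claw3 : forall x a b c, e x a -> e x b -> e x c -> a != b -> a != c -> b != c -> False.
  move=> x a b c va vb vc ab ac bc.
  exact: (claw e_sym e_irr ilab hs va vb vc ab ac bc (tri _ _ _ va vb ab)
            (tri _ _ _ va vc ac) (tri _ _ _ vb vc bc)).
have stp := step e_sym claw3.
case/card_gt0P: cT => z _.
have [q [uq sq szq cq]] := grow stp (n := #|T|) (p := [:: z]) (leq_subr _ _) isT isT.
have clq : closed e (mem q).
  move=> x y exy; apply/idP/idP => [xq|yq]; first exact: cq xq exy.
  by apply: cq yq _; rewrite e_sym.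
have w0 : nth z q 0 \in q by apply: mem_nth; move: szq => /=; lia.
have allq : forall u, u \in q by move=> u; rewrite -(closed_connect clq (conn (nth z q 0) u)).
have Hs : size q = #|T|.
  by rewrite -(card_uniqP uq); apply: eq_card => u; rewrite allq.
have gp : forall u, index u q < #|T| by move=> u; rewrite -Hs index_mem allq.
exists (fun i : 'I_#|T| => nth z q i); split.
  exists (fun u => Ordinal (gp u)).
    by move=> i; apply: val_inj => /=; rewrite index_uniq // Hs.
  by move=> u /=; rewrite nth_index // allq.
move=> i j; have ii : (i : nat) < size q by rewrite Hs.
have jj : (j : nat) < size q by rewrite Hs.
move: (nat_of_ord i) (nat_of_ord j) ii jj => a b ha hb.
have nc := nocyc e_sym z acyc uq sq.
have sP := sortedP z sq.
case: (ltngtP a b) => [lt|gt|->].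
- case: (eqVneq a.+1 b) => [E|ne]; first by subst b; exact: sP a hb.
  rewrite /= (_ : (b.+1 == a) = false); last by apply/negbTE/eqP; lia.
  by apply/negbTE/nc => //; move: lt ne => /=; lia.
- case: (eqVneq b.+1 a) => [E|ne]; first by subst a; rewrite orbT e_sym; exact: (sP b ha).
  rewrite /= (_ : (a.+1 == b) = false); last by apply/negbTE/eqP; lia.
  by rewrite e_sym; apply/negbTE/nc => //; move: gt ne => /=; lia.
- by rewrite e_irr; apply/esym/negbTE; rewrite negb_or; apply/andP; split; apply/eqP; lia.
Qed.
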